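(* Let $q\ge 2$, $n\ge 1$, $\delta\ge 2$, and let $r$ be a prime power with $r>q$. Then there exists a subset $\mathcal A\subseteq J_q(n)$ with $$|\mathcal A|\ge\frac{\binom{n+q-1}{n}}{r^{\delta-2}(r-1)}$$ such that $d_L(\mathbf u,\mathbf v)\ge 2\delta$ for all distinct $\mathbf u,\mathbf v\in\mathcal A$.
   Context: $J_q(n)=\{(a_1,\dots,a_q)\in\mathbb Z_{\ge0}^q:\ \sum_{i=1}^q a_i=n\}$. The $L^1$-distance is $d_L(\mathbf u,\mathbf v)=\sum_{i=1}^q|u_i-v_i|$. *)

(* Defs.v *)
From mathcomp Require Import all_boot all_order all_algebra.
Set Implicit Arguments. Unset Strict Implicit. Unset Printing Implicit Defensive.

(* A vector (a_1,...,a_q) of nonnegative integers with entries <= n is encoded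
   as a finite function 'I_q -> 'I_n.+1; every element of J_q(n) has entries
   <= n, so J_q(n) is represented exactly. *)
Definition vec (q n : nat) := {ffun 'I_q -> 'I_n.+1}.

Definition Jq (q n : nat) : {set vec q n} :=
  [set a : vec q n | \sum_(i < q) (a i : nat) == n].

(* L^1 distance: |u_i - v_i| on nat is (u_i - v_i) + (v_i - u_i) (truncated). *)
Definition dL (q n : nat) (u v : vec q n) : nat :=
  \sum_(i < q) (((u i : nat) - v i) + ((v i : nat) - u i)).

Definition prime_power (r : nat) : Prop :=
  exists p k : nat, prime p /\ 0 < k /\ r = p ^ k.

(* Main.v *)
Require Import Defs.
From mathcomp Require Import all_boot all_order all_algebra.
From mathcomp Require Import finfield zify.
Import Order.TTheory GRing.Theory Num.Theory.

Section Code.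
Variable F : finFieldType.
Variables q n d : nat.
Variable al : 'I_q -> F.
Hypothesis al_inj : injective al.
Hypothesis al_nz : forall i, al i != 0%R.
Hypothesis d2 : 2 <= d.

Local Open Scope ring_scope.

Definition Pe (e : 'I_q -> nat) : {poly F} := \prod_(i < q) ('X - (al i)%:P) ^+ e i.

Lemma Pe_monic_size e : Pe e \is monic /\ size (Pe e) = (\sum_(i<q) e i)%N.+1.
Proof.
rewrite /Pe; apply: (big_rec2 (fun p s => p \is monic /\ size p = s.+1)).
  by rewrite monic1 size_poly1.
move=> i p s _ [mp sp]; split; first by rewrite rpredM // monic_exp // monicXsubC.
rewrite size_monicM ?monic_exp ?monicXsubC ?monic_neq0 // size_exp_XsubC sp.
by rewrite addSn /= addnS.
Qed.

Lemma Pe_horner e x : (Pe e).[x] = \prod_(i<q) (x - al i) ^+ e i.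
Proof. by rewrite /Pe horner_prod; apply: eq_bigr => i _; rewrite horner_exp hornerXsubC. Qed.

Lemma Pe_coef0 e : (Pe e)`_0 != 0.
Proof.
rewrite -horner_coef0 Pe_horner; apply/prodf_neq0 => i _.
by rewrite expf_neq0 // sub0r oppr_eq0 al_nz.
Qed.

Lemma eq_Pe e1 e2 : (forall i, e1 i = e2 i) -> Pe e1 = Pe e2.
Proof. by move=> H; apply: eq_bigr => i _; rewrite H. Qed.

Lemma PeD e1 e2 : Pe (fun i => e1 i + e2 i)%N = Pe e1 * Pe e2.
Proof. by rewrite /Pe -big_split; apply: eq_bigr => i _; rewrite exprD. Qed.

Definition Pu (u : vec q n) := Pe (fun i => (u i : nat)).

Definition keyc (u : vec q n) : {ffun 'I_(d-2) -> F} * F :=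
  ([ffun j : 'I_(d-2) => (Pu u)`_(n.-1 - j)], (Pu u)`_0).

Lemma key_in u : (keyc u).2 != 0.
Proof. exact: Pe_coef0. Qed.

Lemma key_dist (u v : vec q n) : u \in Jq q n -> v \in Jq q n ->
  keyc u = keyc v -> u != v -> (2 * d <= dL u v)%N.
Proof.
rewrite !inE => /eqP Su /eqP Sv [Hk H0] neq.
rewrite leqNgt; apply/negP => Hlt.
pose c := fun i => minn (u i) (v i).
pose w := fun i => (u i - c i)%N.
pose w' := fun i => (v i - c i)%N.
have Eu : Pu u = Pe c * Pe w.
  by rewrite -PeD; apply: eq_Pe => i; rewrite /w /c; lia.
have Ev : Pu v = Pe c * Pe w'.
  by rewrite -PeD; apply: eq_Pe => i; rewrite /w' /c; lia.
have Scw : (\sum_(i<q) c i + \sum_(i<q) w i)%N = n.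
  by rewrite -big_split -Su; apply: eq_bigr => i _; simpl; rewrite /w /c; lia.
have Scw' : (\sum_(i<q) c i + \sum_(i<q) w' i)%N = n.
  by rewrite -big_split -Sv; apply: eq_bigr => i _; simpl; rewrite /w' /c; lia.
set s := (\sum_(i<q) w i)%N in Scw.
have Sw' : (\sum_(i<q) w' i)%N = s by lia.
have EdL : dL u v = (s + s)%N.
  rewrite /dL -{1}Sw' /s -big_split; apply: eq_bigr => i _; rewrite /w /w' /c; simpl; lia.
have ltsd : (s < d)%N by lia.
have [mC sC] := Pe_monic_size c.
have [mU sU] : Pu u \is monic /\ size (Pu u) = n.+1 by rewrite -Su; exact: Pe_monic_size.
have [mV sV] : Pu v \is monic /\ size (Pu v) = n.+1 by rewrite -Sv; exact: Pe_monic_size.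
have sD : (size (Pu u - Pu v)%R <= n + 2 - d)%N.
  apply/leq_sizeP => j hj; rewrite coefB.
  have [ltnj|] := ltnP n j.
    by rewrite !nth_default ?sU ?sV // subrr.
  rewrite leq_eqVlt => /orP [/eqP ->|ltjn].
    have := monicP mU; have := monicP mV; rewrite !lead_coefE.
    by rewrite sU sV /= => -> ->; rewrite subrr.
  have hj' : (n.-1 - j < d - 2)%N by lia.
  have := congr1 (fun f : {ffun 'I_(d-2) -> F} => f (Ordinal hj')) Hk; rewrite !ffunE /=.
  have -> : (n.-1 - (n.-1 - j) = j)%N by lia.
  by move=> ->; rewrite subrr.
have ED : Pu u - Pu v = Pe c * (Pe w - Pe w') by rewrite Eu Ev mulrBr.
have sPQ : (size (Pe w - Pe w')%R <= 1)%N.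
  rewrite leqNgt; apply/negP => h.
  have nz : Pe w - Pe w' != 0 by rewrite -size_poly_gt0; lia.
  move: sD; rewrite ED size_monicM // sC.
  have : (\sum_(i<q) c i = n - s)%N by lia.
  move=> ->; lia.
have EPQ : Pe w = Pe w'.
  move/size1_polyC: sPQ => E.
  move: H0 => /eqP; rewrite -subr_eq0 -coefB ED E coefMC.
  rewrite mulf_eq0 (negbTE (Pe_coef0 c)) /= => /eqP k0.
  by apply/eqP; rewrite -subr_eq0 E k0.
case: (pickP (fun j => (0 < w j)%N)) => [j hj | none]; last first.
  have s0 : s = 0%N by rewrite /s big1 // => i _; move: (none i) => /= /negbT; lia.
  have w'0 : forall i, w' i = 0%N.
    move=> i; apply/eqP; move: (Sw'); rewrite s0 => /eqP.
    by rewrite sum_nat_eq0 => /forallP /(_ i) /implyP /(_ isT).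
  move/negP: neq; apply; apply/eqP/ffunP => i; apply: val_inj => /=.
  move: (none i) (w'0 i) => /= /negbT; rewrite /w /w' /c; lia.
have w'j : w' j = 0%N by move: hj; rewrite /w /w' /c; lia.
have : (Pe w).[al j] = 0.
  by rewrite Pe_horner (bigD1 j) //= subrr expr0n (gtn_eqF hj) mul0r.
rewrite EPQ Pe_horner => /eqP; apply/negP/prodf_neq0 => i _.
have [->|nij] := eqVneq i j; first by rewrite w'j expr0 oner_neq0.
by rewrite expf_neq0 // subr_eq0; apply/eqP => /al_inj E; rewrite E eqxx in nij.
Qed.

End Code.

Lemma card_Jq q n : 0 < q -> #|Jq q n| = 'C(n + q - 1, n).
Proof.
case: q => // m _.
have -> : (n + m.+1 - 1 = m + n)%N by lia.
rewrite -bin_sub ?leq_addl // addnK -card_ord_partitions.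
pose g (t : m.+1.-tuple 'I_n.+1) : vec m.+1 n := [ffun i => tnth t i].
have ginj : injective g.
  move=> t1 t2 E; apply: eq_from_tnth => i.
  by have := congr1 (fun f : vec m.+1 n => f i) E; rewrite !ffunE.
rewrite -(card_imset _ ginj); apply: eq_card => a; rewrite !inE.
apply/idP/imsetP.
  move=> Ha; exists [tuple a i | i < m.+1].
    by rewrite inE big_tuple; under eq_bigr do rewrite tnth_mktuple.
  by apply/ffunP => i; rewrite ffunE tnth_mktuple.
move=> [t]; rewrite inE => Ht ->.
by under eq_bigr do rewrite ffunE; rewrite big_tuple in Ht.
Qed.

Theorem lemma4p3 (q n delta r : nat) :
  2 <= q -> 1 <= n -> 2 <= delta -> prime_power r -> q < r ->
  exists A : {set vec q n},
    A \subset Jq q n /\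
    (('C(n + q - 1, n))%:R / ((r ^ (delta - 2) * (r - 1))%:R) <= (#|A|%:R : rat))%R /\
    (forall u v, u \in A -> v \in A -> u != v -> 2 * delta <= dL u v).
Proof.
move=> q2 n1 d2 [p [k [pp [k0 Er]]]] qr.
have [F _ cardF] := pPrimePowerField pp k0.
rewrite -Er in cardF.
pose S := [set~ (0%R : F)].
have cS : #|S| = (r - 1)%N by rewrite cardsC1 cardF; lia.
have hq : q <= #|S| by lia.
pose al (i : 'I_q) : F := enum_val (widen_ord hq i).
have al_inj : injective al.
  by move=> i j /enum_val_inj /(congr1 val) /= /val_inj.
have al_nz : forall i, al i != 0%R.
  by move=> i; have := enum_valP (widen_ord hq i); rewrite !inE.
pose SK := setX [set: {ffun 'I_(delta-2) -> F}] S.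
have cSK : #|SK| = (r ^ (delta - 2) * (r - 1))%N.
  by rewrite cardsX cardsT card_ffun card_ord cardF cS.
pose J := Jq q n.
pose fib kk := [set u in J | @keyc F q n delta al u == kk].
have EJ : #|J| = \sum_(kk in SK) #|fib kk|.
  rewrite -sum1_card (partition_big (@keyc F q n delta al) (mem SK)) => [|u _]; last first.
    rewrite inE /= inE /= !inE /=. exact: (@Pe_coef0 F q al al_nz (fun i => u i)).
  apply: eq_bigr => kk _; rewrite sum1dep_card; apply: eq_card => u.
  by rewrite !inE.
have SKgt0 : 0 < #|SK|.
  rewrite cSK muln_gt0 expn_gt0; lia.
have [k1 k1in Emax] := eq_bigmax_cond (fun kk => #|fib kk|) SKgt0.
have leJ : #|J| <= #|SK| * #|fib k1|.
  rewrite EJ -Emax -sum_nat_const; apply: leq_sum => kk kkin.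
  exact: leq_bigmax_cond.
exists (fib k1); split.
  by apply/subsetP => u; rewrite inE => /andP[].
split.
  have Dgt0 : (0 < (r ^ (delta - 2) * (r - 1))%:R :> rat)%R.
    by rewrite ltr0n -cSK.
  rewrite ler_pdivrMr // -natrM ler_nat -cSK mulnC -card_Jq; [exact: leJ | lia].
move=> u v; rewrite !inE => /andP[Ju /eqP Ku] /andP[Jv /eqP Kv] uv.
apply: (@key_dist F q n delta al al_inj al_nz d2 u v); rewrite ?inE //.
by rewrite Ku Kv.
Qed.
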